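(* Let $k\ge2$ be an integer and let $(D,X)$ be an instance of 3NodeCover with $|D|=n$ and $\bigcup_{d\in D}d=X$. Construct a digraph $G$ as follows: a vertex $v_d$ for each $d\in D$ (the set of these is $V_1$), a vertex $w_t$ for each $t\in X$ (the set of these is $V_2$), an edge $(v_d,w_t)$ whenever $t\in d$, an extra vertex $a$ with an edge $(a,v)$ for every $v\in V_1$, and for each $v\in V_1$ new vertices $v_1,\dots,v_{k-1}$ and the directed path $a\to v_1\to v_2\to\cdots\to v_{k-1}\to v$ of length $k$. Then $$S_k(G)=OPT_{3NC}+kn+\sum_{d\in D}|d|,$$ where $OPT_{3NC}$ is the optimum of the 3NodeCover instance.
   Context: An instance of 3NodeCover consists of a collection $D$ of subsets of a universe $X$, each subset having at most $3$ elements and each element of $X$ lying in at most $2$ subsets; $OPT_{3NC}$ is the minimum size of a subcollection $M\subseteq D$ with $\bigcup M=X$. For a digraph $G$, a $k$-TC-spanner is a digraph on $V(G)$ whose edges lie in the transitive closure of $G$ such that its directed distance from $u$ to $v$ is at most $k$ whenever $v$ is reachable from $u$ in $G$; $S_k(G)$ is the minimum number of edges of a $k$-TC-spanner. *)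

(* Defs.v *)
From mathcomp Require Import all_boot.
Set Implicit Arguments. Unset Strict Implicit. Unset Printing Implicit Defensive.

Definition tc (V : finType) (G : rel V) (u v : V) : bool :=
  [exists w, G u w && connect G w v].

Fixpoint within (V : finType) (H : rel V) (m : nat) (u v : V) : bool :=
  match m with
  | 0 => u == v
  | m'.+1 => (u == v) || [exists w, H u w && within H m' w v]
  end.

Definition erel (V : finType) (E : {set V * V}) : rel V := fun x y => (x, y) \in E.

Definition is_TC_spanner (V : finType) (G : rel V) (k : nat) (E : {set V * V}) : bool :=
  [forall e in E, tc G e.1 e.2] &&
  [forall u, forall v, connect G u v ==> within (erel E) k u v].

(* S_k(G): minimum number of edges of a k-TC-spanner (the transitive closure itself is one,
   so the default value #|setT| is never the only candidate) *)
Definition S_k (V : finType) (k : nat) (G : rel V) : nat :=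
  \big[minn/#|[set: V * V]|]_(E : {set V * V} | is_TC_spanner G k E) #|E|.

(* The collection D is indexed by a finite type I; subset number i is d i. *)
Definition is_3NC_instance (I X : finType) (d : I -> {set X}) : Prop :=
  (forall i, #|d i| <= 3) /\ (forall x : X, #|[set i | x \in d i]| <= 2).

Definition is_cover (I X : finType) (d : I -> {set X}) (M : {set I}) : bool :=
  \bigcup_(i in M) d i == [set: X].

Definition OPT_3NC (I X : finType) (d : I -> {set X}) : nat :=
  \big[minn/#|I|]_(M : {set I} | is_cover d M) #|M|.

(* Vertices:  None            = a
              Some (inl (inl i)) = v_{d_i}          (V_1)
              Some (inl (inr t)) = w_t              (V_2)
              Some (inr (i, j))  = (v_{d_i})_{j+1},  j < k-1   (path vertices) *)
Notation redV I X k := (option ((I + X) + (I * 'I_k.-1)))%type.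

Definition red_edge (I X : finType) (d : I -> {set X}) (k : nat) : rel (redV I X k) :=
  fun x y =>
  match x, y with
  | None, Some (inl (inl _)) => true
  | None, Some (inr (_, j)) => nat_of_ord j == 0
  | Some (inl (inl i)), Some (inl (inr t)) => t \in d i
  | Some (inr (i, j)), Some (inr (i', j')) =>
      (i == i') && (nat_of_ord j' == (nat_of_ord j).+1)
  | Some (inr (i, j)), Some (inl (inl i')) =>
      (i == i') && ((nat_of_ord j).+1 == k.-1)
  | _, _ => false
  end.

Arguments red_edge {I X} d k _ _.

(* Main.v *)
Require Import Defs.
From mathcomp Require Import all_boot.
From Stdlib Require Import Lia.
Set Implicit Arguments. Unset Strict Implicit. Unset Printing Implicit Defensive.

Ltac nlia := intros; repeat match goal with H : is_true (_ <= _) |- _ => rewrite -?subn1 -?subn2 in H; move/leP: H => H end; rewrite -?subn1 -?subn2; try apply/leP; try unfold subn in *; try unfold addn in *; try unfold muln in *; lia.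

Lemma big_optionT (T : finType) (F : option T -> nat) :
  \sum_(x : option T) F x = F None + \sum_(x : T) F (Some x).
Proof.
rewrite ![index_enum _]unlock [@Finite.enum in LHS]unlock /= big_cons big_map //.
Qed.

Lemma bigmin_le_seq (T : eqType) (r : seq T) (P : pred T) (F : T -> nat) m x :
  x \in r -> P x -> \big[minn/m]_(i <- r | P i) F i <= F x.
Proof.
elim: r => // y r IH; rewrite in_cons big_cons => /orP [/eqP <-|hx] Px.
  by rewrite Px geq_minl.
by case: (P y); [rewrite (leq_trans (geq_minr _ _)) // IH | rewrite IH].
Qed.

Lemma bigmin_le (T : finType) (P : pred T) (F : T -> nat) m x :
  P x -> \big[minn/m]_(x | P x) F x <= F x.
Proof. by move=> Px; apply: bigmin_le_seq => //; rewrite mem_index_enum. Qed.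

Lemma bigmin_eq (T : finType) (P : pred T) (F : T -> nat) m t :
  (exists2 x, P x & F x = t) -> (forall x, P x -> t <= F x) -> t <= m ->
  \big[minn/m]_(x | P x) F x = t.
Proof.
move=> [x Px <-] hge hm; apply/eqP; rewrite eqn_leq; apply/andP; split.
  exact: bigmin_le.
apply: (big_ind (fun y => F x <= y)) => //.
by move=> a b ha hb; rewrite leq_min ha hb.
Qed.

Lemma bigmin_att (T : finType) (P : pred T) (F : T -> nat) m :
  (\big[minn/m]_(x | P x) F x = m) \/ exists2 x, P x & F x = \big[minn/m]_(x | P x) F x.
Proof.
apply: (big_ind (fun y => (y = m) \/ exists2 x, P x & F x = y)); first by left.
  by move=> a b ha hb; case: (leqP a b).
by move=> i Pi; right; exists i.
Qed.


Section Red.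
Variables (I X : finType) (d : I -> {set X}) (k : nat).
Hypothesis hk : 2 <= k.
Hypothesis hU : \bigcup_(i : I) d i = [set: X].
Local Notation V := (redV I X k).
Local Notation G := (red_edge d k).

Definition lev (x : V) : nat :=
  match x with
  | None => 0
  | Some (inl (inl _)) => k
  | Some (inl (inr _)) => k.+1
  | Some (inr (_, j)) => (nat_of_ord j).+1
  end.

Lemma G_lev x y : G x y -> lev x < lev y.
Proof.
case: x => [[[i|t]|[i j]]|]; case: y => [[[i'|t']|[i' j']]|] //=.
all: move=> h; have hk2 := hk; try (case/andP: h => _ /eqP h); nlia.
Qed.

Lemma path_lev p x : path G x p -> lev x <= lev (last x p).
Proof.
elim: p x => [|y p IH] x //= /andP [hxy hp].
exact: leq_trans (ltnW (G_lev hxy)) (IH _ hp).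
Qed.

Lemma connect_lev x y : connect G x y -> lev x <= lev y.
Proof. by move/connectP=> [p hp ->]; exact: path_lev. Qed.

Lemma tc_lev x y : tc G x y -> lev x < lev y.
Proof. by case/existsP => w /andP [h1 h2]; exact: leq_trans (G_lev h1) (connect_lev h2). Qed.

Definition fe (x y : V) : bool := G x y && (lev y == (lev x).+1).
Definition Fset : {set V * V} := [set e | fe e.1 e.2].

Lemma within_lev (E : {set V * V}) : (forall e, e \in E -> tc G e.1 e.2) ->
  forall m u v, within (erel E) m u v -> (u == v) || (lev u < lev v).
Proof.
move=> hE; elim=> [|m IH] u v /=; first by move=> ->.
case/orP=> [->//|/existsP [w /andP [hw hwv]]].
have /tc_lev h := hE _ hw.
case/orP: (IH _ _ hwv) => [/eqP <-|h']; apply/orP; right; first by [].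
exact: ltn_trans h h'.
Qed.

Lemma within_step (H : rel V) m u v : within H m u v -> u != v ->
  exists2 w, H u w & within H m.-1 w v.
Proof.
case: m => [/= /eqP ->|m /= /orP [/eqP ->| /existsP [w /andP [h1 h2]]]];
  try by rewrite eqxx.
by move=> _; exists w.
Qed.

Lemma spanner_within E u v : is_TC_spanner G k E -> connect G u v ->
  within (erel E) k u v.
Proof.
case/andP=> _ /forallP hW h; have /forallP := hW u; move/(_ v)/implyP; exact.
Qed.

Lemma spanner_edges E : is_TC_spanner G k E -> forall e, e \in E -> tc G e.1 e.2.
Proof. by case/andP=> /forall_inP h _. Qed.

Lemma forced_in E : is_TC_spanner G k E -> Fset \subset E.
Proof.
move=> hS; apply/subsetP => -[x y]; rewrite inE /= => /andP [hxy /eqP hl].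
have hw := spanner_within hS (connect1 hxy).
have hne : x != y by apply/eqP => hxy'; move: (G_lev hxy); rewrite hxy' ltnn.
have [w hxw hwy] := within_step hw hne.
have /tc_lev hl1 := spanner_edges hS hxw.
case/orP: (within_lev (spanner_edges hS) hwy) => [/eqP <- //|].
by rewrite hl ltnS leqNgt hl1.
Qed.


Definition rr (u v : V) : bool :=
  match u, v with
  | None, _ => true
  | Some (inr (i, j)), Some (inr (i', j')) => (i == i') && (nat_of_ord j <= nat_of_ord j')
  | Some (inr (i, _)), Some (inl (inl i')) => i == i'
  | Some (inr (i, _)), Some (inl (inr t)) => t \in d i
  | Some (inl (inl i)), Some (inl (inl i')) => i == i'
  | Some (inl (inl i)), Some (inl (inr t)) => t \in d i
  | Some (inl (inr s)), Some (inl (inr t)) => s == t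
  | _, _ => false
  end.

Lemma rr_refl v : rr v v.
Proof. by case: v => [[[i|t]|[i j]]|] /=; rewrite ?eqxx ?leqnn. Qed.

Lemma rr_step u x v : G u x -> rr x v -> rr u v.
Proof.
case: u => [[[i|s]|[i j]]|] //; case: x => [[[i'|s']|[i' j']]|] //=;
  case: v => [[[i''|t]|[i'' j'']]|] //=.
all: try by move=> h /eqP <-.
all: try by move=> /andP [/eqP <- _] /eqP <-.
all: try by move=> /andP [/eqP <- _].
move=> /andP [/eqP <- /eqP ->] /andP [-> h]; exact: ltnW.
Qed.

Lemma rr_connect x y v : connect G x y -> rr y v -> rr x v.
Proof.
move/connectP=> [p hp ->]; elim: p x hp => [|z p IH] x //= /andP [hxz hp] h.
exact: rr_step hxz (IH _ hp h).
Qed.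

Lemma rr_tc x y v : tc G x y -> rr y v -> rr x v.
Proof.
case/existsP => w /andP [h1 h2] h; exact: rr_step h1 (rr_connect h2 h).
Qed.

Lemma connect_rr u v : connect G u v -> rr u v.
Proof. by move=> h; apply: rr_connect h (rr_refl v). Qed.

Definition col (e : V * V) : option I :=
  match e.1 with
  | Some (inl (inl i)) => Some i
  | Some (inr (i, _)) => Some i
  | Some (inl (inr _)) => None
  | None => match e.2 with
            | Some (inl (inl i)) => Some i
            | Some (inr (i, _)) => Some i
            | Some (inl (inr t)) => [pick i | t \in d i]
            | None => None
            end
  end.

Lemma cover_elem t : exists i, t \in d i.
Proof.
have : t \in [set: X] by rewrite in_setT.
by rewrite -hU => /bigcupP [i _ hi]; exists i.
Qed.

Lemma col_good u w t : tc G u w -> rr u (Some (inl (inr t))) -> rr w (Some (inl (inr t))) ->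
  exists2 i, col (u, w) = Some i & t \in d i.
Proof.
case: u => [[[i|s]|[i j]]|] /=.
- by move=> _ h _; exists i.
- by case/existsP => y /andP []; case: y => [[[?|?]|[? ?]]|].
- by move=> _ h _; exists i.
- case: w => [[[i|s]|[i j]]|] /=.
  + by move=> _ _ h; exists i.
  + move=> _ _ /eqP ->; rewrite /col /=; case: (pickP (fun i => t \in d i)) => [i hi|hn]; first by exists i.
    by have [i hi] := cover_elem t; move: (hn i); rewrite hi.
  + by move=> _ _ h; exists i.
  + by move/tc_lev; rewrite ltnn.
Qed.

Definition Mset (E : {set V * V}) : {set I} :=
  [set i | [exists e in E :\: Fset, col e == Some i]].

Lemma claim (E : {set V * V}) : (forall e, e \in E -> tc G e.1 e.2) -> forall t m u,
  within (erel E) m u (Some (inl (inr t))) ->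
  rr u (Some (inl (inr t))) &&
  ((k.+1 - lev u <= m) || [exists i, (i \in Mset E) && (t \in d i)]).
Proof.
move=> hE t; elim => [|m IH] u /=.
  by move/eqP->; rewrite rr_refl /= subnn.
case/orP => [/eqP -> | /existsP [w /andP [huw hw]]].
  by rewrite rr_refl /= subnn.
have htc := hE _ huw.
case/andP: (IH _ hw) => hr hor; rewrite (rr_tc htc hr) /=.
case/orP: hor => [hh|->]; last by rewrite orbT.
case hF: ((u, w) \in Fset).
  move: hF; rewrite inE /= => /andP [_ /eqP hl].
  by apply/orP; left; rewrite hl in hh; nlia.
apply/orP; right; apply/existsP.
have [i hc hi] := col_good htc (rr_tc htc hr) hr.
exists i; rewrite hi andbT inE; apply/existsP; exists (u, w).
have huw2 : (u, w) \in E := huw.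
by rewrite inE hF huw2 hc eqxx.
Qed.

Lemma Mset_cover (E : {set V * V}) : is_TC_spanner G k E -> is_cover d (Mset E).
Proof.
move=> hS; apply/eqP/setP => t; rewrite in_setT; apply/bigcupP.
have [i0 hi0] := cover_elem t.
have hc : connect G None (Some (inl (inr t))).
  have h1 : G None (Some (inl (inl i0))) by [].
  have h2 : G (Some (inl (inl i0))) (Some (inl (inr t))) by [].
  exact: connect_trans (connect1 h1) (connect1 h2).
have := claim (spanner_edges hS) (spanner_within hS hc).
case/andP=> _ /orP [|/existsP [i /andP [h1 h2]]]; first by rewrite subn0 ltnn.
by exists i.
Qed.

Lemma Mset_card (E : {set V * V}) : #|Mset E| <= #|E :\: Fset|.
Proof.
have <- : #|Some @: Mset E| = #|Mset E| by apply: card_imset => a b [].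
apply: leq_trans (leq_imset_card col _).
apply: subset_leq_card; apply/subsetP => _ /imsetP [i hi ->].
move: hi; rewrite inE => /exists_inP [e he /eqP <-]; exact: imset_f.
Qed.


Lemma within_refl (H : rel V) n u : within H n u u.
Proof. by case: n => /=; rewrite eqxx. Qed.

Lemma within_cons (H : rel V) m u w v : H u w -> within H m w v -> within H m.+1 u v.
Proof. by move=> h1 h2 /=; apply/orP; right; apply/existsP; exists w; rewrite h1. Qed.

Lemma within_mono (H : rel V) m n u v : m <= n -> within H m u v -> within H n u v.
Proof.
elim: m n u => [|m IH] n u /=.
  by move=> _ /eqP ->; apply: within_refl.
case: n => // n hmn /orP [/eqP ->|/existsP [w /andP [h1 h2]]].
  exact: within_refl.
exact: within_cons h1 (IH _ _ hmn h2).
Qed.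

Lemma within_cat (H : rel V) m n u w v :
  within H m u w -> within H n w v -> within H (m + n) u v.
Proof.
elim: m u => [|m IH] u /=.
  by move/eqP ->; rewrite add0n.
case/orP => [/eqP -> h|/existsP [y /andP [h1 h2]] h].
  by apply: (@within_mono H n (m + n).+1 w v) => //; nlia.
exact: (within_cons (m := m + n) h1 (IH _ h2 h)).
Qed.

Definition E0 (M : {set I}) : {set V * V} :=
  Fset :|: [set (None, Some (inl (inl i))) | i in M].

Lemma F_E0 M x y : fe x y -> erel (E0 M) x y.
Proof. by move=> h; rewrite /erel /E0 inE; apply/orP; left; rewrite inE. Qed.

Lemma col_within M i : forall n (j j' : 'I_k.-1), nat_of_ord j' = j + n ->
  within (erel (E0 M)) n (Some (inr (i, j))) (Some (inr (i, j'))).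
Proof.
elim => [|n IH] j j' h.
  have -> : j' = j by apply: ord_inj; rewrite h addn0.
  exact: within_refl.
have hj1 : j.+1 < k.-1 by rewrite (leq_ltn_trans _ (ltn_ord j')) // h addnS ltnS leq_addr.
apply: (@within_cons _ _ _ (Some (inr (i, Ordinal hj1)))).
  by apply: F_E0; rewrite /fe /= !eqxx.
apply: (IH (Ordinal hj1) j'). by rewrite h /= addSnnS.
Qed.

Lemma k_pos0 : 0 < k.-1. Proof. by have := hk; nlia. Qed.
Lemma k_posm : k.-2 < k.-1. Proof. by have := hk; nlia. Qed.
Definition j0 : 'I_k.-1 := Ordinal k_pos0.
Definition jm : 'I_k.-1 := Ordinal k_posm.

Lemma pv_to_v M i (j : 'I_k.-1) :
  within (erel (E0 M)) (k.-2 - j).+1 (Some (inr (i, j))) (Some (inl (inl i))).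
Proof.
rewrite -addn1; apply: (@within_cat _ _ _ _ (Some (inr (i, jm)))).
  apply: col_within => /=; have := ltn_ord j; have := hk; nlia.
apply: (@within_cons _ _ _ (Some (inl (inl i)))); last exact: within_refl.
by apply: F_E0; rewrite /fe /= eqxx /=; apply/andP; split; apply/eqP; have := hk; nlia.
Qed.

Lemma rr_within M : is_cover d M -> forall u v, rr u v -> within (erel (E0 M)) k u v.
Proof.
move=> hM u v; have hk2 := hk.
have hvw : forall i t, t \in d i ->
    erel (E0 M) (Some (inl (inl i))) (Some (inl (inr t))).
  by move=> i t ht; apply: F_E0; rewrite /fe /= ht eqxx.
case: u => [[[i|s]|[i j]]|]; case: v => [[[i'|t]|[i' j']]|] //=.
- by move/eqP <-; apply: within_refl.
- move=> ht; apply: (within_mono (m := 1)); first nlia.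
  by apply: within_cons (hvw _ _ ht) (within_refl _ 0 _).
- by move/eqP <-; apply: within_refl.
- move/eqP <-; apply: within_mono (pv_to_v M i j); have := ltn_ord j; nlia.
- move=> ht; apply: (within_mono (m := (k.-2 - j).+1 + 1)).
    have := ltn_ord j; nlia.
  apply: within_cat (pv_to_v M i j) _.
  by apply: within_cons (hvw _ _ ht) (within_refl _ 0 _).
- move=> /andP [/eqP <- hjj].
  apply: (within_mono (m := j' - j)); first by have := ltn_ord j'; nlia.
  by apply: col_within; rewrite subnKC.
- move=> _; apply: (within_mono (m := 1 + (k.-2 - j0).+1)); first by rewrite /= subn0; nlia.
  apply: within_cat (pv_to_v M i' j0).
  apply: (@within_cons _ _ _ (Some (inr (i', j0)))); last exact: within_refl.
  by apply: F_E0.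
- move=> _; have : t \in \bigcup_(i in M) d i by rewrite (eqP hM) in_setT.
  case/bigcupP => i hi ht.
  apply: (within_mono (m := 2)) => //.
  apply: (@within_cons _ _ _ (Some (inl (inl i)))).
    by rewrite /erel /E0 inE; apply/orP; right; apply: imset_f.
  by apply: within_cons (hvw _ _ ht) (within_refl _ 0 _).
- move=> _; apply: (within_mono (m := 1 + j')); first by have := ltn_ord j'; nlia.
  apply: (@within_cons _ _ _ (Some (inr (i', j0)))); first by apply: F_E0.
  by apply: col_within.
- move=> _; exact: within_refl.
Qed.

Lemma E0_spanner M : is_cover d M -> is_TC_spanner G k (E0 M).
Proof.
move=> hM; apply/andP; split.
  apply/forall_inP => -[x y]; rewrite /E0 !inE => /orP [/andP [h _]|/imsetP [i _ [-> ->]]] /=.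
    by apply/existsP; exists y; rewrite h connect0.
  by apply/existsP; exists (Some (inl (inl i))); rewrite /= connect0.
apply/forallP => u; apply/forallP => v; apply/implyP => h.
exact: rr_within hM _ _ (connect_rr h).
Qed.


Lemma gN : #|[set y | fe None y]| = #|I|.
Proof.
rewrite (_ : [set y | fe None y] = (fun i => Some (inr (i, j0))) @: [set: I]).
  by rewrite card_imset ?cardsT // => a b [].
have hk1 : (k == 1) = false by apply/negbTE/eqP => h; move: hk; rewrite h.
apply/setP => y; rewrite inE; case: y => [[[i|t]|[i j]]|] /=.
- by rewrite /fe /= hk1; symmetry; apply/negP => /imsetP [i' _ h].
- by rewrite /fe /=; symmetry; apply/negP => /imsetP [i' _ h].
- rewrite /fe /=; apply/idP/idP.
    move/andP => [/eqP hj _]; apply/imsetP; exists i; rewrite ?in_setT //.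
    by congr (Some (inr (i, _))); apply: ord_inj; rewrite hj.
  by case/imsetP => i' _ [_ ->].
- by rewrite /fe /=; symmetry; apply/negP => /imsetP [i' _ h].
Qed.


Lemma gv i : #|[set y | fe (Some (inl (inl i))) y]| = #|d i|.
Proof.
rewrite (_ : [set y | fe _ y] = (fun t => Some (inl (inr t))) @: d i).
  by rewrite card_imset // => a b [].
apply/setP => y; rewrite inE; case: y => [[[i'|t]|[i' j']]|] /=.
- by rewrite /fe /=; symmetry; apply/negP => /imsetP [i'' _ h].
- rewrite /fe /= eqxx andbT; apply/idP/idP; first by move=> h; apply: imset_f.
  by case/imsetP => t' ht [->].
- by rewrite /fe /=; symmetry; apply/negP => /imsetP [i'' _ h].
- by rewrite /fe /=; symmetry; apply/negP => /imsetP [i'' _ h].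
Qed.

Lemma gw t : #|[set y | fe (Some (inl (inr t))) y]| = 0.
Proof.
have -> : [set y | fe (Some (inl (inr t))) y] = set0.
  by apply/setP => y; rewrite !inE /fe; case: y => [[[?|?]|[? ?]]|].
by rewrite cards0.
Qed.

Lemma gp i (j : 'I_k.-1) : #|[set y | fe (Some (inr (i, j))) y]| = 1.
Proof.
have [hlt|hge] := ltnP j.+1 k.-1.
  have -> : [set y | fe (Some (inr (i, j))) y] = [set Some (inr (i, Ordinal hlt))].
    apply/setP => y; rewrite !inE /fe; case: y => [[[i'|t]|[i' j']]|] //=.
      have -> : (j.+1 == k.-1) = false by apply/negbTE; rewrite neq_ltn hlt.
      by rewrite andbF.
    apply/idP/idP.
      move/andP => [/andP [/eqP <- /eqP hj] _]; apply/eqP.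
      by congr (Some (inr (_, _))); apply: ord_inj.
    by move/eqP => [<- ->] /=; rewrite !eqxx.
  by rewrite cards1.
have hj : j.+1 = k.-1 by have := ltn_ord j; nlia.
have hj1 : (j.+1 == k.-1) by rewrite hj.
have hj2 : (k == j.+2) by apply/eqP; have := hk; nlia.
have -> : [set y | fe (Some (inr (i, j))) y] = [set Some (inl (inl i))].
  apply/setP => y; rewrite !inE /fe; case: y => [[[i'|t]|[i' j']]|] //=.
  - rewrite hj1 hj2 !andbT; apply/idP/idP; first by move/eqP ->.
    by move/eqP => [->].
  - have -> : (nat_of_ord j' == j.+1) = false by apply/negbTE; rewrite neq_ltn hj ltn_ord.
    by rewrite andbF.
by rewrite cards1.
Qed.


Lemma card_Fset : #|Fset| = k * #|I| + \sum_(i : I) #|d i|.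
Proof.
have -> : #|Fset| = \sum_(x : V) #|[set y | fe x y]|.
  transitivity (\sum_(p : V * V | predT p.1 && fe p.1 p.2) 1); first by rewrite sum1dep_card.
  by rewrite -(pair_big_dep (@predT V) fe (fun _ _ => 1)); apply: eq_bigr => x _; rewrite sum1dep_card.
rewrite big_optionT big_sumType big_sumType /= gN.
have e1 : \sum_(i : I) #|[set y | fe (Some (inl (inl i))) y]| = \sum_(i : I) #|d i|.
  by apply: eq_bigr => i _; rewrite gv.
have e2 : \sum_(t : X) #|[set y | fe (Some (inl (inr t))) y]| = 0.
  by apply: big1 => t _; rewrite gw.
have e3 : \sum_(p : I * 'I_k.-1) #|[set y | fe (Some (inr p)) y]| = #|I| * k.-1.
  rewrite (eq_bigr (fun _ => 1)); last by move=> [i j] _; rewrite gp.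
  by rewrite sum1_card card_prod card_ord.
have -> : k * #|I| = #|I| + #|I| * k.-1.
  by rewrite -[k in k * _](prednK (ltnW hk)) mulSn mulnC.
rewrite e1 e2 e3 addn0; set a := #|I|; set b := a * _; set c := \sum_i _.
by rewrite [c + b]addnC addnA.
Qed.


Lemma card_E0 M : #|E0 M| = #|Fset| + #|M|.
Proof.
rewrite /E0 cardsU card_imset; last by move=> a b [].
rewrite (_ : _ :&: _ = set0) ?cards0 ?subn0 //.
apply/setP => -[x y]; rewrite !inE; apply/negbTE/andP => -[/andP [_ h] /imsetP [i _ [hx hy]]].
by move: h; rewrite hx hy /= => /eqP h; move: hk; rewrite h.
Qed.

Lemma main_sec : S_k k G = OPT_3NC d + k * #|I| + \sum_(i : I) #|d i|.
Proof.
have [M0 hM0 hM0c] : exists2 M, is_cover d M & #|M| = OPT_3NC d.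
  have [h|[M hM e]] := bigmin_att (fun M : {set I} => is_cover d M) (fun M => #|M|) #|I|.
    exists setT; last by rewrite cardsT /OPT_3NC h.
    by apply/eqP; rewrite -hU; apply: eq_bigl => i; rewrite in_setT.
  by exists M.
have hOPT : forall M, is_cover d M -> OPT_3NC d <= #|M|.
  by move=> M hM; apply: bigmin_le.
rewrite -addnA -card_Fset addnC.
have hE0 : #|E0 M0| = #|Fset| + OPT_3NC d by rewrite card_E0 hM0c.
apply: bigmin_eq.
- by exists (E0 M0); [exact: E0_spanner | rewrite hE0].
- move=> E hE; have hsub := forced_in hE.
  have -> : #|E| = #|Fset| + #|E :\: Fset|.
    rewrite cardsD (setIidPr hsub) subnKC //; exact: subset_leq_card.
  rewrite leq_add2l; apply: leq_trans (Mset_card E).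
  exact: hOPT (Mset_cover hE).
- by rewrite -hE0; apply: subset_leq_card; apply: subsetT.
Qed.

End Red.

Theorem mainTheorem15 (I X : finType) (d : I -> {set X}) (k : nat) :
  2 <= k ->
  is_3NC_instance d ->
  \bigcup_(i : I) d i = [set: X] ->
  S_k k (red_edge d k) = OPT_3NC d + k * #|I| + \sum_(i : I) #|d i|.
Proof. by move=> hk _ hU; apply: main_sec. Qed.
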